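(* For natural concepts $C_1,C_2,D_1,D_2,E_1,E_2$: $\{C_1:D_1::D_2:C_2,\ C_1:E_1::E_2:C_2\}\models D_1:E_1::E_2:D_2$.
   Context: Concepts: $C,D::=\top\mid\bot\mid A\mid C\sqcap D\mid \exists r.C\mid N$; natural concepts: $N,N'::=A'\mid N\sqcap N'\mid N\bowtie N'\mid \exists r'.N$, with $A$ a concept name, $A'$ a natural concept name, $r$ a role name, $r'$ an intra-domain role name. A domain constrained interpretation is $\mathfrak{I}=(\mathcal{I},[\mathcal{F}_1,\dots,\mathcal{F}_k],\mathcal{X},\pi,\sim,\mathcal{S})$ where $\mathcal{I}=(\Delta^{\mathcal{I}},\cdot^{\mathcal{I}})$ is a classical DL interpretation, $[\mathcal{F}_1,\dots,\mathcal{F}_k]$ partitions a nonempty finite set $\mathcal{F}$, $\mathcal{X}\subseteq2^{\mathcal{F}}$ with $\mathcal{F}\in\mathcal{X}$, $\pi:\Delta^{\mathcal{I}}\to2^{\mathcal{F}}$, $\sim$ an equivalence relation on $\{1,\dots,k\}$, $\mathcal{S}=\{\sigma_{(s,t)}\mid(s,t)\in\sim\}$ with $\sigma_{(s,t)}:\mathcal{F}_s\to\mathcal{F}_t$ bijections. With $\mathcal{C}=\{G\subseteq\mathcal{F}\mid X\not\subseteq G\ \forall X\in\mathcal{X}\}$ and $\mathcal{C}^i=\{G\in\mathcal{C}\mid G\subseteq\mathcal{F}_i\}$ it is required: (1) $X\not\subseteq\pi(d)$ for all $d$, $X\in\mathcal{X}$; (2) each $G\in\mathcal{C}$ is $\pi(d)$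 for some $d$; (3) $\sigma_{(s,t)}^{-1}=\sigma_{(t,s)}$, $\sigma_{(t,u)}\circ\sigma_{(s,t)}=\sigma_{(s,u)}$; (4) $\sigma_{(i,j)}(G)\in\mathcal{C}$ for $G\in\mathcal{C}^i$, $(i,j)\in\sim$; (5) $\{f,g\}\in\mathcal{X}$ whenever $f\in\mathcal{F}_i$, $g\in\mathcal{F}_j$, $(i,j)\in\sim$, $i\neq j$. $\varphi(C)=\bigcap\{\pi(d)\mid d\in C^{\mathcal{I}}\}$ ($=\mathcal{F}$ if $C^{\mathcal{I}}=\emptyset$). Concepts are interpreted as usual, with $(N\bowtie N')^{\mathcal{I}}=\{d\mid\varphi(N)\cap\varphi(N')\subseteq\pi(d)\}$. An intra-domain relation $r$: there is $\kappa_r:2^{\mathcal{F}}\to2^{\mathcal{F}}$ with $(\exists r.C)^{\mathcal{I}}=\{d\mid\kappa_r(\varphi(C))\subseteq\pi(d)\}$ for all $C$, $\kappa_r(G)=\bigcup_i\kappa_r(G\cap\mathcal{F}_i)$ for $G\in\mathcal{C}$, $\kappa_r(G)\subseteq\mathcal{F}_i$ for $G\in\mathcal{C}^i$, $\kappa_r(\sigma_{(i,j)}(G))=\sigma_{(i,j)}(\kappa_r(G))$ for $(i,j)\in\sim$, $G\in\mathcal{C}^i$, and $\kappa_r(G)\neq\emptyset$ for $G\in\mathcal{C}^i\setminus\{\emptyset\}$. $\delta(C)=\{i\mid\mathcal{F}_i\cap\varphi(C)\neq\emptyset\}$. For $U=\{(s_1,t_1),\dots,(s_l,t_l)\}\subseteq\sim$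 with pairwise distinct $s_i$ and pairwise distinct $t_i$, the domain translation $\sigma_U:\mathcal{F}\to\mathcal{F}$ maps $f\in\mathcal{F}_{s_i}$ to $\sigma_{(s_i,t_i)}(f)$ and fixes all other features; $\mathrm{src}(U)=\{s_i\}$, $\mathrm{tgt}(U)=\{t_i\}$. $\mu(C,D)$ is the set of $\sigma_U$ with $\varphi(D)=\sigma_U(\varphi(C))$, $\mathrm{src}(U)\subseteq\delta(C)$, $\mathrm{tgt}(U)\cap(\delta(C)\setminus\mathrm{src}(U))=\emptyset$. An analogy assertion $C_1:C_2::D_1:D_2$ (between natural concepts) is satisfied in $\mathfrak{I}$ iff $\mu(C_1,C_2)\cap\mu(D_1,D_2)\neq\emptyset$; a concept inclusion $C\sqsubseteq D$ is satisfied iff $C^{\mathcal{I}}\subseteq D^{\mathcal{I}}$. A TBox is a finite set of concept inclusions and analogy assertions. $\mathfrak{I}$ is a model of a TBox $\mathcal{T}$ if it satisfies all its elements, every natural concept $N$ in $\mathcal{T}$ satisfies $N^{\mathcal{I}}=\{d\mid\varphi(N)\subseteq\pi(d)\}$, and every intra-domain role name is interpreted as an intra-domain relation. $\mathcal{T}\models\psi$ means every model of $\mathcal{T}$ satisfies $\psi$. *)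

(* Defs.v *)
From Stdlib Require Import Classical ClassicalEpsilon List.
From mathcomp Require Import all_boot.
Set Implicit Arguments. Unset Strict Implicit. Unset Printing Implicit Defensive.

Definition pb (P : Prop) : bool :=
  if excluded_middle_informative P then true else false.

(* Natural concepts  N ::= A' | N ⊓ N' | N ⋈ N' | ∃r'.N
   (A' natural concept names, r' intra-domain role names, both indexed by nat) *)
Inductive natural : Type :=
| NName of nat
| NAnd of natural & natural
| NBow of natural & natural
| NEx of nat & natural.

Inductive role : Type := RN of nat | IRN of nat.

Inductive concept : Type :=
| CTop | CBot
| CName of nat
| CAnd of concept & concept
| CEx of role & concept
| CNat of natural.

(* TBox elements: concept inclusions and analogy assertions N1:N2::N3:N4 *)
Inductive axiom : Type :=
| CI of concept & concept
| AA of natural & natural & natural & natural.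

Definition tbox := list axiom.

Fixpoint nat_subs (N : natural) : list natural :=
  N :: match N with
       | NName _ => nil
       | NAnd a b | NBow a b => nat_subs a ++ nat_subs b
       | NEx _ a => nat_subs a
       end.

Fixpoint concept_nats (C : concept) : list natural :=
  match C with
  | CTop | CBot | CName _ => nil
  | CAnd a b => concept_nats a ++ concept_nats b
  | CEx _ a => concept_nats a
  | CNat N => nat_subs N
  end.

Definition axiom_nats (a : axiom) : list natural :=
  match a with
  | CI C D => concept_nats C ++ concept_nats D
  | AA a b c d => nat_subs a ++ nat_subs b ++ nat_subs c ++ nat_subs d
  end.

Section Semantics.
Variables (Dl : Type) (F : finType) (k : nat).

Definition blockF (blk : F -> 'I_k) (i : 'I_k) : {set F} := [set f | blk f == i].

Definition consistent (Xs : {set {set F}}) (G : {set F}) : bool :=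
  [forall Y in Xs, ~~ (Y \subset G)].

(* Domain constrained interpretation (I, [F_1..F_k], 𝒳, π, ~, 𝒮) *)
Record dci := DCI {
  (* classical interpretation I = (Δ, ·^I), Δ = Dl *)
  dom_ne : inhabited Dl;
  cI : nat -> Dl -> Prop;            (* concept names *)
  nI : nat -> Dl -> Prop;            (* natural concept names *)
  rI : nat -> Dl -> Dl -> Prop;      (* ordinary role names *)
  iI : nat -> Dl -> Dl -> Prop;      (* intra-domain role names *)
  (* features: F nonempty finite, partitioned into nonempty blocks F_1..F_k *)
  F_ne : 0 < #|F|;
  blk : F -> 'I_k;
  blk_ne : forall i : 'I_k, exists f, blk f = i;
  Xs : {set {set F}};
  X_full : [set: F] \in Xs;
  piF : Dl -> {set F};
  sim : 'I_k -> 'I_k -> Prop;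
  sim_refl : forall i, sim i i;
  sim_sym : forall i j, sim i j -> sim j i;
  sim_trans : forall i j l, sim i j -> sim j l -> sim i l;
  sgm : 'I_k -> 'I_k -> F -> F;       (* sgm s t = σ_(s,t), meaningful on F_s *)
  sgm_into : forall s t, sim s t -> forall f, blk f = s -> blk (sgm s t f) = t;
  sgm_inj : forall s t, sim s t -> forall f g, blk f = s -> blk g = s ->
              sgm s t f = sgm s t g -> f = g;
  sgm_surj : forall s t, sim s t -> forall g, blk g = t ->
              exists f, blk f = s /\ sgm s t f = g;
  cond1 : forall d Y, Y \in Xs -> ~~ (Y \subset piF d);
  cond2 : forall G, consistent Xs G -> exists d, piF d = G;
  cond3_inv : forall s t, sim s t -> forall g, blk g = t -> sgm s t (sgm t s g) = g;
  cond3_comp : forall s t u, sim s t -> sim t u -> forall f, blk f = s ->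
              sgm t u (sgm s t f) = sgm s u f;
  cond4 : forall i j G, sim i j -> consistent Xs G -> G \subset blockF blk i ->
              consistent Xs (sgm i j @: G);
  cond5 : forall i j f g, sim i j -> i <> j -> blk f = i -> blk g = j ->
              [set f; g] \in Xs
}.

Variable I : dci.

(* φ of an extension: intersection of the π(d), d in the extension (F if empty) *)
Definition phi_of (S : Dl -> Prop) : {set F} :=
  [set f | pb (forall d, S d -> f \in piF I d)].

Fixpoint nat_ext (N : natural) : Dl -> Prop :=
  match N with
  | NName a => nI I a
  | NAnd a b => fun d => nat_ext a d /\ nat_ext b d
  | NBow a b => fun d => phi_of (nat_ext a) :&: phi_of (nat_ext b) \subset piF I d
  | NEx r a => fun d => exists e, iI I r d e /\ nat_ext a e
  end.

Definition role_ext (r : role) : Dl -> Dl -> Prop :=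
  match r with RN n => rI I n | IRN n => iI I n end.

Fixpoint ext (C : concept) : Dl -> Prop :=
  match C with
  | CTop => fun _ => True
  | CBot => fun _ => False
  | CName a => cI I a
  | CAnd a b => fun d => ext a d /\ ext b d
  | CEx r a => fun d => exists e, role_ext r d e /\ ext a e
  | CNat N => nat_ext N
  end.

Definition phi (C : concept) : {set F} := phi_of (ext C).
Definition phiN (N : natural) : {set F} := phi_of (nat_ext N).

Definition intra_domain (R : Dl -> Dl -> Prop) : Prop :=
  exists kap : {set F} -> {set F},
    (forall C d, (exists e, R d e /\ ext C e) <-> kap (phi C) \subset piF I d) /\
    (forall G, consistent (Xs I) G ->
        kap G = \bigcup_(i : 'I_k) kap (G :&: blockF (blk I) i)) /\
    (forall i G, consistent (Xs I) G -> G \subset blockF (blk I) i ->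
        kap G \subset blockF (blk I) i) /\
    (forall i j G, sim I i j -> consistent (Xs I) G -> G \subset blockF (blk I) i ->
        kap (sgm I i j @: G) = sgm I i j @: kap G) /\
    (forall i G, consistent (Xs I) G -> G \subset blockF (blk I) i -> G != set0 ->
        kap G != set0).

Definition delta (N : natural) : {set 'I_k} :=
  [set i : 'I_k | blockF (blk I) i :&: phiN N != set0].

Definition validU (U : {set 'I_k * 'I_k}) : Prop :=
  (forall p, p \in U -> sim I p.1 p.2) /\
  (forall p q, p \in U -> q \in U -> p.1 = q.1 -> p = q) /\
  (forall p q, p \in U -> q \in U -> p.2 = q.2 -> p = q).

Definition transl (U : {set 'I_k * 'I_k}) (f : F) : F :=
  match [pick t | (blk I f, t) \in U] with
  | Some t => sgm I (blk I f) t f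
  | None => f
  end.

Definition src (U : {set 'I_k * 'I_k}) : {set 'I_k} := [set p.1 | p in U].
Definition tgt (U : {set 'I_k * 'I_k}) : {set 'I_k} := [set p.2 | p in U].

Definition in_mu (C D : natural) (g : F -> F) : Prop :=
  exists U, validU U /\ g =1 transl U /\
    phiN D = transl U @: phiN C /\
    src U \subset delta C /\
    tgt U :&: (delta C :\: src U) = set0.

Definition sat_analogy (C1 C2 D1 D2 : natural) : Prop :=
  exists g, in_mu C1 C2 g /\ in_mu D1 D2 g.

Definition sat_axiom (a : axiom) : Prop :=
  match a with
  | CI C D => forall d, ext C d -> ext D d
  | AA a b c d => sat_analogy a b c d
  end.

Definition model (T : tbox) : Prop :=
  (forall a, In a T -> sat_axiom a) /\
  (forall N, (exists a, In a T /\ In N (axiom_nats a)) ->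
      forall d, nat_ext N d <-> phiN N \subset piF I d) /\
  (forall n, intra_domain (iI I n)).

End Semantics.

Definition entails (T : tbox) (psi : axiom) : Prop :=
  forall (Dl : Type) (F : finType) (k : nat) (I : dci Dl F k),
    model I T -> sat_axiom I psi.

(* Main.v *)
Require Import Defs.
From Stdlib Require Import List Classical ClassicalEpsilon.
From mathcomp Require Import all_boot.
Set Implicit Arguments. Unset Strict Implicit. Unset Printing Implicit Defensive.

Section P7.
Variables (Dl : Type) (F : finType) (k : nat) (I : dci Dl F k).

Local Notation bl := (blk I).
Local Notation sg := (sgm I).
Local Notation sm := (sim I).
Local Notation P := (phiN I).

Lemma sgm_id s f : bl f = s -> sg s s f = f.
Proof.
move=> Hf; have Hr := sim_refl I s.
apply: (sgm_inj Hr) => //; first exact: sgm_into.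
by rewrite cond3_comp.
Qed.

Lemma in_delta X i : i \in delta I X <-> exists f, f \in P X /\ bl f = i.
Proof.
rewrite inE; split.
  by case/set0Pn=> f; rewrite inE /blockF inE => /andP [/eqP H1 H2]; exists f.
by case=> f [H1 H2]; apply/set0Pn; exists f; rewrite inE /blockF inE H2 eqxx.
Qed.

Lemma in_src (U : {set 'I_k * 'I_k}) i : i \in src U <-> exists t, (i, t) \in U.
Proof.
split; first by case/imsetP=> [[a b] H ->]; exists b.
by case=> t H; apply/imsetP; exists (i, t).
Qed.

Lemma in_tgt (U : {set 'I_k * 'I_k}) i : i \in tgt U <-> exists s, (s, i) \in U.
Proof.
split; first by case/imsetP=> [[a b] H ->]; exists a.
by case=> t H; apply/imsetP; exists (t, i).
Qed.

Lemma transl_some (U : {set 'I_k * 'I_k}) f t : validU I U -> (bl f, t) \in U -> transl I U f = sg (bl f) t f.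
Proof.
case=> _ [H1 _] Ht; rewrite /transl; case: pickP => [t' Ht'|H].
  by have := H1 _ _ Ht' Ht erefl => -[->].
by move: (H t); rewrite Ht.
Qed.

Lemma transl_none (U : {set 'I_k * 'I_k}) f : (forall t, (bl f, t) \notin U) -> transl I U f = f.
Proof.
move=> H; rewrite /transl; case: pickP => [t' Ht'|//].
by move: (H t'); rewrite Ht'.
Qed.

Definition mu_at X (g : F -> F) (U : {set 'I_k * 'I_k}) :=
  [/\ validU I U, g =1 transl I U, src U \subset delta I X &
      tgt U :&: (delta I X :\: src U) = set0].

Section G.
Variables (X : natural) (g : F -> F) (U : {set 'I_k * 'I_k}).
Hypothesis HU : mu_at X g U.

Lemma gG1 f : sm (bl f) (bl (g f)) /\ g f = sg (bl f) (bl (g f)) f.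
Proof.
case: HU => HV Hg _ _; rewrite Hg /transl; case: pickP => [t Ht|_].
  have Hs : sm (bl f) t by case: HV => H _; exact: (H _ Ht).
  by rewrite (sgm_into Hs erefl).
by split; [exact: sim_refl | rewrite sgm_id].
Qed.

Lemma gG2 f f' : bl f = bl f' -> bl (g f) = bl (g f').
Proof.
case: HU => HV Hg _ _ => Hff; rewrite !Hg /transl -Hff.
case: pickP => [t Ht|_] //.
have Hs : sm (bl f) t by case: HV => H _; exact: (H _ Ht).
by rewrite (sgm_into Hs erefl) (sgm_into Hs (esym Hff)).
Qed.

Lemma gcase f : (exists t, (bl f, t) \in U /\ bl (g f) = t) \/
                ((forall t, (bl f, t) \notin U) /\ g f = f).
Proof.
case: HU => HV Hg _ _; rewrite Hg /transl; case: pickP => [t Ht|H].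
  have Hs : sm (bl f) t by case: HV => H _; exact: (H _ Ht).
  by left; exists t; rewrite (sgm_into Hs erefl).
by right; split => // t; rewrite H.
Qed.

Lemma nsrc f : (forall t, (bl f, t) \notin U) -> bl f \notin src U.
Proof. by move=> H; apply/negP => /in_src [t Ht]; move: (H t); rewrite Ht. Qed.

Lemma gG3 x x' : x \in P X -> x' \in P X -> bl (g x) = bl (g x') -> bl x = bl x'.
Proof.
case: HU => HV Hg Hsrc Htgt Hx Hx'.
have tg : forall y y' t, y' \in P X -> (bl y, t) \in U -> bl y' = t ->
   (forall t, (bl y', t) \notin U) -> False.
  move=> y y' t Hy' Hp Ht Hn.
  have : bl y' \in tgt U :&: (delta I X :\: src U).
    rewrite inE in_setD; apply/andP; split; first by apply/in_tgt; exists (bl y); rewrite Ht.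
    by rewrite nsrc //=; apply/in_delta; exists y'.
  by rewrite Htgt inE.
case: (gcase x) => [[t [Ht Hgt]]|[Hn Hgx]]; case: (gcase x') => [[t' [Ht' Hgt']]|[Hn' Hgx']].
- move=> E; rewrite Hgt Hgt' in E.
  by case: HV => _ [_ H2]; have := H2 _ _ Ht Ht' E => -[].
- by rewrite Hgx' Hgt => E; case: (tg _ _ _ Hx' Ht (esym E) Hn').
- by rewrite Hgx Hgt' => E; case: (tg _ _ _ Hx Ht' E Hn).
- by rewrite Hgx Hgx'.
Qed.

Lemma gG4 x f : x \in P X -> bl (g f) = bl x -> bl f <> bl x -> bl (g x) <> bl x.
Proof.
move=> Hx Hf Hne.
case: (gcase f) => [[t [Ht Hgt]]|[_ Hgf]]; last by rewrite Hgf in Hf.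
subst t; case: HU => HV Hg Hsrc Htgt.
case: (gcase x) => [[t' [Ht' Hgt']]|[Hn Hgx]].
  move=> E; rewrite E in Hgt'; subst t'.
  case: HV => _ [_ H2]; have := H2 _ _ Ht Ht'; rewrite /= Hf => /(_ erefl).
  by move=> /(congr1 fst) /= /Hne.
have : bl (g f) \in tgt U :&: (delta I X :\: src U).
  rewrite inE in_setD; apply/andP; split; first by apply/in_tgt; exists (bl f).
  by rewrite Hf nsrc //=; apply/in_delta; exists x.
by rewrite Htgt inE.
Qed.

Lemma gG5 f : bl (g f) <> bl f -> exists x, x \in P X /\ bl x = bl f.
Proof.
move=> Hne; case: (gcase f) => [[t [Ht Hgt]]|[_ Hgf]]; last by rewrite Hgf in Hne.
case: HU => _ _ Hsrc _; apply/in_delta; apply: (subsetP Hsrc).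
by apply/in_src; exists t.
Qed.

Lemma ginj : {in P X &, injective g}.
Proof.
move=> x x' Hx Hx' E.
have Eb := gG3 Hx Hx' (f_equal bl E).
case: (gG1 x) => Hs1 E1; case: (gG1 x') => _ E2.
have Ebg := f_equal bl E.
apply: (sgm_inj Hs1 erefl (esym Eb)).
by rewrite -E1 {1}E E2 -Eb -Ebg.
Qed.

Lemma gcard Y : P Y = transl I U @: P X -> #|P Y| = #|P X|.
Proof.
case: HU => _ Hg _ _ ->; rewrite -(eq_imset _ Hg).
by apply: card_in_imset; exact: ginj.
Qed.
End G.

Lemma pbE (Q : Prop) : pb Q <-> Q.
Proof. by rewrite /pb; case: excluded_middle_informative. Qed.

Definition sc (Q : {set F}) := forall f f', f \in Q -> f' \in Q -> sm (bl f) (bl f') -> bl f = bl f'.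

Lemma K1 X : P X = setT \/ sc (P X).
Proof.
case: (classic (exists d, nat_ext I X d)) => [[d Hd]|Hn].
  right => f f' Hf Hf' Hs; apply: NNPP => Hne.
  have HX := cond5 Hs Hne erefl erefl.
  have := cond1 d HX; rewrite /negb; case: ifP => // /negP []; apply/subsetP => z.
  rewrite !inE => /orP [] /eqP ->.
    by move: Hf; rewrite /phiN /phi_of inE => /pbE /(_ d Hd).
  by move: Hf'; rewrite /phiN /phi_of inE => /pbE /(_ d Hd).
left; apply/setP => f; rewrite /phiN /phi_of !inE; apply/pbE => d Hd.
by case: Hn; exists d.
Qed.

Lemma setT_card (Q : {set F}) : (Q = setT) <-> #|Q| = #|F|.
Proof.
split; first by move=> ->; rewrite cardsT.
move=> H; apply/eqP; rewrite eqEcard subsetT /= cardsT H //.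
Qed.


Lemma imgE X Y g U : mu_at X g U -> P Y = transl I U @: P X -> P Y = g @: P X.
Proof. by case=> _ Hg _ _ ->; apply: eq_imset => x; rewrite Hg. Qed.

Lemma mu_id X Y : P Y = P X -> in_mu I X Y id.
Proof.
move=> E; exists set0; split; first by split; [move=> p; rewrite inE | split; move=> p q; rewrite inE].
have Ht : transl I set0 =1 id by move=> f; apply: transl_none => t; rewrite inE.
split => //; split; first by rewrite E (eq_imset _ Ht) imset_id.
split; first by apply/subsetP => i /in_src [t]; rewrite inE.
by apply/setP => i; rewrite !inE; apply/negP => /andP [/in_tgt [s]]; rewrite inE.
Qed.

Lemma F1 X Z g U U' : mu_at X g U -> P X = setT -> mu_at Z g U' -> sc (P Z) ->
  forall z, z \in P Z -> g z = z.
Proof.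
move=> HX HT HZ Hsc z Hz.
have [Hs Eg] := gG1 HZ z.
suff Eb : bl (g z) = bl z by rewrite Eg Eb sgm_id.
apply: NNPP => Hne.
have [x Hx] := blk_ne I (bl (g z)).
have Hxin : x \in P X by rewrite HT inE.
have H4 := gG4 HX Hxin (esym Hx) (fun E => Hne (etrans (esym Hx) (esym E))).
have [z' [Hz' Ez']] := gG5 HZ H4.
apply: Hne; apply: esym; rewrite -Hx -Ez'; apply: Hsc => //.
by rewrite Ez' Hx.
Qed.

Lemma fix_img Y Z (g : F -> F) : (forall z, z \in P Z -> g z = z) -> P Y = g @: P Z -> P Y = P Z.
Proof. by move=> H ->; rewrite (eq_in_imset H) imset_id. Qed.

Section W.
Variables (C1 D1 E1 : natural) (g h : F -> F) (U1 V1 : {set 'I_k * 'I_k}).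
Hypotheses (HU1 : mu_at C1 g U1) (HV1 : mu_at C1 h V1).
Hypotheses (ED1 : P D1 = g @: P C1) (EE1 : P E1 = h @: P C1).

Definition W := [set p : 'I_k * 'I_k | (p.1 != p.2) &&
   [exists c in P C1, (bl (g c) == p.1) && (bl (h c) == p.2)]].

Lemma inW a b : (a, b) \in W <-> a <> b /\ exists c, c \in P C1 /\ bl (g c) = a /\ bl (h c) = b.
Proof.
rewrite inE /=; split.
  case/andP => /eqP Hne /existsP [c /andP [Hc /andP [/eqP H1 /eqP H2]]].
  by split => //; exists c.
case=> /eqP Hne [c [Hc [H1 H2]]]; rewrite Hne /=; apply/existsP; exists c.
by rewrite Hc H1 H2 !eqxx.
Qed.

Lemma validW : validU I W.
Proof.
split.
  case=> a b /inW [_ [c [Hc [<- <-]]]] /=.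
  have [H1 _] := gG1 HU1 c; have [H2 _] := gG1 HV1 c.
  exact: sim_trans (sim_sym H1) H2.
split.
  case=> a b [a' b'] /inW [_ [c [Hc [Ha Hb]]]] /inW [_ [c' [Hc' [Ha' Hb']]]] /= E.
  subst; have Eb1 := gG3 HU1 Hc Hc' E.
  by rewrite (gG2 HV1 Eb1) E.
case=> a b [a' b'] /inW [_ [c [Hc [Ha Hb]]]] /inW [_ [c' [Hc' [Ha' Hb']]]] /= E.
subst; have Eb1 := gG3 HV1 Hc Hc' E.
by rewrite (gG2 HU1 Eb1) E.
Qed.

Lemma W_D1 c : c \in P C1 -> transl I W (g c) = h c.
Proof.
move=> Hc.
have [Hs1 Eg] := gG1 HU1 c; have [Hs2 Eh] := gG1 HV1 c.
case: (eqVneq (bl (g c)) (bl (h c))) => [Eab|Nab].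
  rewrite transl_none; first by rewrite Eg Eh Eab.
  move=> t; apply/negP => /inW [Hne [c' [Hc' [Ha Hb]]]].
  have Eb1 := gG3 HU1 Hc' Hc Ha.
  by apply: Hne; rewrite -Hb (gG2 HV1 Eb1) Eab.
have HW : (bl (g c), bl (h c)) \in W by apply/inW; split; [exact/eqP | exists c].
rewrite (transl_some validW HW).
have Hs3 : sm (bl (g c)) (bl (h c)) by case: validW => H _; exact: (H _ HW).
by have := cond3_comp Hs1 Hs3 (erefl (bl c)); rewrite -Eg -Eh.
Qed.

Lemma D1side : in_mu I D1 E1 (transl I W).
Proof.
exists W; split; first exact: validW.
split => //; split.
  rewrite EE1 ED1 -imset_comp; apply: eq_in_imset => c Hc /=.
  by rewrite W_D1.
split.
  apply/subsetP => i /in_src [t /inW [_ [c [Hc [Ha _]]]]].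
  by apply/in_delta; exists (g c); rewrite ED1 imset_f.
apply/setP => i; rewrite in_set0; apply/negP; rewrite inE in_setD.
case/andP => /in_tgt [a /inW [Hne [c [Hc [Ha Hb]]]]] /andP [Hns /in_delta [d [Hd Hbd]]].
move: Hd; rewrite ED1 => /imsetP [c' Hc' Ed]; subst d.
move/negP: Hns; apply; apply/in_src; exists (bl (h c')); apply/inW; split.
  move=> E; have Eb1 := gG3 HV1 Hc' Hc (etrans (esym E) (esym Hb)).
  by apply: Hne; rewrite -Ha -(gG2 HU1 Eb1) Hbd.
by exists c'; rewrite Hbd.
Qed.

Section E2side.
Variables (C2 D2 E2 : natural) (U2 V2 : {set 'I_k * 'I_k}).
Hypotheses (HU2 : mu_at D2 g U2) (HV2 : mu_at E2 h V2).
Hypotheses (EC2g : P C2 = g @: P D2) (EC2h : P C2 = h @: P E2).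
Hypotheses (sc1 : sc (P C1)) (scD : sc (P D2)) (scE : sc (P E2)).

Lemma key e d : e \in P E2 -> d \in P D2 -> h e = g d -> transl I W e = d.
Proof.
move=> He Hd E.
have [Hhs Hhe] := gG1 HV2 e; have [Hgs Hgd] := gG1 HU2 d.
have Ec : bl (h e) = bl (g d) by rewrite E.
case: (eqVneq (bl e) (bl d)) => [Ebb|Nbb].
  have Eed : e = d.
    apply: (sgm_inj Hhs erefl (esym Ebb)).
    by rewrite -Hhe E Ebb; exact: Hgd.
  subst d; rewrite transl_none // => t; apply/negP => /inW [Hne [c0 [Hc0 [Ha Hb]]]].
  case: (eqVneq (bl c0) (bl e)) => [Es|Ns].
    apply: Hne; rewrite -Ha -Hb (gG2 HU1 Es) (gG2 HV1 Es) E //.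
  have H4 := gG4 HU2 Hd Ha (elimN eqP Ns).
  have [c1 [Hc1 Ec1]] := gG5 HU1 H4.
  apply: (elimN eqP Ns); rewrite -Ec1; apply: sc1 => //.
  by rewrite Ec1 -Ha; case: (gG1 HU1 c0).
case: (eqVneq (bl (g d)) (bl d)) => [Ecb'|Ncb'].
  have Hhmv : bl (h e) <> bl e by rewrite Ec Ecb'; apply/eqP; rewrite eq_sym.
  have [c1 [Hc1 Ec1]] := gG5 HV1 Hhmv.
  have Eg1 : bl (g c1) = bl e.
    apply: NNPP => Hn; rewrite -Ec1 in Hn.
    have [d' [Hd' Ed']] := gG5 HU2 Hn.
    apply: (elimN eqP Nbb); rewrite -Ec1 -Ed'; apply: scD => //.
    by rewrite Ed' Ec1 -Ecb' -Ec.
  have Eh1 : bl (h c1) = bl d by rewrite (gG2 HV1 Ec1) Ec Ecb'.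
  have HW : (bl e, bl d) \in W by apply/inW; split; [exact/eqP | exists c1].
  rewrite (transl_some validW HW).
  by rewrite -{1}Ecb' -Ec -Hhe E Hgd Ecb' sgm_id.
case: (eqVneq (bl (h e)) (bl e)) => [Ecb|Ncb].
  have [c1 [Hc1 Ec1]] := gG5 HU1 (elimN eqP Ncb').
  have Eg1 : bl (g c1) = bl e by rewrite (gG2 HU1 Ec1) -Ec Ecb.
  have Eh1 : bl (h c1) = bl d.
    apply: NNPP => Hn; rewrite -Ec1 in Hn.
    have [e' [He' Ee']] := gG5 HV2 Hn.
    apply: (elimN eqP Nbb); rewrite -Ec1 -Ee'; apply: scE => //.
    by rewrite Ee' Ec1 -Ecb Ec; apply: sim_sym.
  have HW : (bl e, bl d) \in W by apply/inW; split; [exact/eqP | exists c1].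
  rewrite (transl_some validW HW).
  have Hhe' : h e = e by rewrite Hhe Ecb sgm_id.
  have Hed : e = g d by rewrite -E Hhe'.
  have He' : e = sg (bl d) (bl e) d.
    by apply: etrans Hed _; rewrite Hgd -Ec Ecb.
  have Hsim : sm (bl e) (bl d) by apply: sim_sym; rewrite -Ecb Ec.
  by have := cond3_inv Hsim (erefl (bl d)); rewrite -He'.
have [c1 [Hc1 Ec1]] := gG5 HV1 (elimN eqP Ncb).
have [c2 [Hc2 Ec2]] := gG5 HU1 (elimN eqP Ncb').
case: (elimN eqP Nbb); rewrite -Ec1 -Ec2; apply: sc1 => //.
rewrite Ec1 Ec2; apply: sim_trans Hhs _; rewrite Ec; exact: sim_sym.
Qed.

Lemma E2side_mu : in_mu I E2 D2 (transl I W).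
Proof.
exists W; split; first exact: validW.
split => //; split.
  apply/setP => d; apply/idP/imsetP.
    move=> Hd; have : g d \in P C2 by rewrite EC2g imset_f.
    rewrite EC2h => /imsetP [e He Ee]; exists e => //.
    by rewrite (key He Hd (esym Ee)).
  case=> e He ->; have : h e \in P C2 by rewrite EC2h imset_f.
  rewrite EC2g => /imsetP [d0 Hd0 Ed0].
  by rewrite (key He Hd0 Ed0).
split.
  apply/subsetP => i /in_src [b0 /inW [Hne [c0 [Hc0 [Ha Hb]]]]].
  apply/in_delta.
  case: (eqVneq (bl (g c0)) (bl c0)) => [Es|Ns].
    have Hn : bl (h c0) <> bl c0 by rewrite Hb -Es Ha; apply: nesym.
    have [e [He Ee]] := gG5 HV2 Hn.
    by exists e; rewrite Ee -Es.
  have [d [Hd Ed]] := gG5 HU2 (elimN eqP Ns).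
  have : g d \in P C2 by rewrite EC2g imset_f.
  rewrite EC2h => /imsetP [e He Ee].
  have Egd : bl (g d) = i by rewrite (gG2 HU2 Ed).
  exists e; split => //.
  apply: NNPP => Hn.
  have Hm : bl (h e) <> bl e by rewrite -Ee Egd; apply: nesym.
  have [c1 [Hc1 Ec1]] := gG5 HV1 Hm.
  have Ese : bl e = bl c0.
    rewrite -Ec1; apply: sc1 => //.
    rewrite Ec1; apply: sim_trans (gG1 HV2 e).1 _.
    rewrite -Ee Egd -Ha; apply: sim_sym; exact: (gG1 HU1 c0).1.
  apply: Hne; rewrite -Hb -(gG2 HV1 Ese) -Ee Egd //.
apply/setP => i; rewrite in_set0; apply/negP; rewrite inE in_setD.
case/andP => /in_tgt [a /inW [Hne [c0 [Hc0 [Ha Hb]]]]] /andP [_ /in_delta [e [He Hbe]]].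
case: (eqVneq i (bl c0)) => [Eis|Nis].
  have Ns : bl (g c0) <> bl c0 by rewrite Ha -Eis.
  have Ehe : bl (h e) = i by rewrite (gG2 HV2 (f' := c0)) ?Hb // Hbe.
  have : h e \in P C2 by rewrite EC2h imset_f.
  rewrite EC2g => /imsetP [d Hd Ed].
  have [d' [Hd' Ed']] := gG5 HU2 Ns.
  case: (eqVneq (bl d) (bl c0)) => [Edc|Ndc].
    apply: Hne; rewrite -Ha -(gG2 HU1 Edc) -Ed Ehe //.
  apply: (elimN eqP Ndc); rewrite -Ed'; apply: scD => //.
  rewrite Ed' -Eis -Ehe Ed; exact: (gG1 HU2 d).1.
have H4 := gG4 HV2 He (f := c0) (etrans Hb (esym Hbe)) (fun E => (elimN eqP Nis) (etrans (esym Hbe) (esym E))).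
have [c1 [Hc1 Ec1]] := gG5 HV1 H4.
apply: (elimN eqP Nis); rewrite -Hbe -Ec1; apply: esym; apply: sc1 => //.
rewrite Ec1 Hbe -Hb; exact: (gG1 HV1 c0).1.
Qed.
End E2side.
End W.

Lemma notT_sc X : P X <> setT -> sc (P X).
Proof. by case: (K1 X). Qed.

Lemma cardT X Y : #|P Y| = #|P X| -> (P Y = setT <-> P X = setT).
Proof. by rewrite !setT_card => ->. Qed.

Lemma ana_id D1 E1 E2 D2 : P E1 = P D1 -> P D2 = P E2 -> sat_analogy I D1 E1 E2 D2.
Proof. by move=> H1 H2; exists id; split; apply: mu_id. Qed.

Lemma final C1 C2 D1 D2 E1 E2 :
  sat_analogy I C1 D1 D2 C2 -> sat_analogy I C1 E1 E2 C2 -> sat_analogy I D1 E1 E2 D2.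
Proof.
case=> g [[U1 [HVU1 [Hg1 [ED1 [Hs1 Ht1]]]]] [U2 [HVU2 [Hg2 [EC2 [Hs2 Ht2]]]]]].
case=> h [[V1 [HVV1 [Hh1 [EE1 [Hs3 Ht3]]]]] [V2 [HVV2 [Hh2 [EC2' [Hs4 Ht4]]]]]].
have HU1 : mu_at C1 g U1 by split.
have HU2 : mu_at D2 g U2 by split.
have HV1 : mu_at C1 h V1 by split.
have HV2 : mu_at E2 h V2 by split.
have cD1 := gcard HU1 ED1; have cC2 := gcard HU2 EC2.
have cE1 := gcard HV1 EE1; have cC2' := gcard HV2 EC2'.
have ED1' := imgE HU1 ED1; have EC2g := imgE HU2 EC2.
have EE1' := imgE HV1 EE1; have EC2h := imgE HV2 EC2'.
case: (eqVneq (P C1) setT) => [T1|N1].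
  have TD1 : P D1 = setT by apply/(cardT cD1).
  have TE1 : P E1 = setT by apply/(cardT cE1).
  case: (eqVneq (P D2) setT) => [TD2|ND2].
    have TC2 : P C2 = setT by apply/(cardT cC2).
    have TE2 : P E2 = setT by apply/(cardT cC2'); rewrite -TC2.
    by apply: ana_id; rewrite ?TD1 ?TE1 ?TD2 ?TE2.
  have SD2 := notT_sc (elimN eqP ND2).
  have E1' := fix_img (F1 HU1 T1 HU2 SD2) EC2g.
  have NE2 : P E2 <> setT.
    by move/(cardT cC2'); rewrite E1'; apply/eqP.
  have E2' := fix_img (F1 HV1 T1 HV2 (notT_sc NE2)) EC2h.
  by apply: ana_id; rewrite ?TD1 ?TE1 // -E1' -E2'.
have S1 := notT_sc (elimN eqP N1).
case: (eqVneq (P D2) setT) => [TD2|ND2].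
  have TC2 : P C2 = setT by apply/(cardT cC2).
  have TE2 : P E2 = setT by apply/(cardT cC2'); rewrite -TC2.
  have X1 := fix_img (F1 HU2 TD2 HU1 S1) ED1'.
  have X2 := fix_img (F1 HV2 TE2 HV1 S1) EE1'.
  by apply: ana_id; rewrite ?X1 ?X2 ?TD2 ?TE2.
have SD2 := notT_sc (elimN eqP ND2).
have NC2 : P C2 <> setT by move/(cardT cC2); apply/eqP.
have NE2 : P E2 <> setT by move/(cardT cC2') => H; apply: NC2; apply/H.
exists (transl I (W C1 g h)); split.
  exact: (D1side HU1 HV1 ED1' EE1').
exact: (E2side_mu HU1 HV1 HU2 HV2 EC2g EC2h S1 SD2 (notT_sc NE2)).
Qed.
End P7.

Theorem proposition7 (C1 C2 D1 D2 E1 E2 : natural) :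
  entails (AA C1 D1 D2 C2 :: AA C1 E1 E2 C2 :: nil) (AA D1 E1 E2 D2).
Proof.
move=> Dl F k I [Hax _].
have A1 := Hax _ (or_introl erefl).
have A2 := Hax _ (or_intror (or_introl erefl)).
exact: (final A1 A2).
Qed.
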